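(* Let $K$ be a field with $\operatorname{char}(K)\neq2$ and let $(M,N,(\cdot_1,\cdot_2),\partial,(\{-,-\},\langle-,-\rangle))$ be a braided crossed module of Leibniz $K$-algebras. Then $(M\rtimes N,N,\bar s,\bar t,\bar e,\bar k,(\bar\tau,\bar\psi))$ is a braided categorical Leibniz $K$-algebra, where $\bar s(m,n)=n$, $\bar t(m,n)=\partial m+n$, $\bar e(n)=(0,n)$, $\bar k\colon (M\rtimes N)\times_N(M\rtimes N)\to M\rtimes N$ (pullback of $\bar t$ and $\bar s$) is $\bar k((m,n),(m',\partial m+n))=(m+m',n)$, $\bar\tau_{n,n'}=(-2\{n,n'\},[n,n'])$ and $\bar\psi_{n,n'}=(-2\langle n,n'\rangle,[n,n'])$.
   Context: A Leibniz $K$-algebra is a $K$-vector space with a bilinear bracket satisfying $[x,[y,z]]=[[x,y],z]-[[x,z],y]$. A Leibniz action of $N$ on $M$ is a pair of bilinear maps $\cdot_1\colon N\times M\to M$, $\cdot_2\colon M\times N\to M$ with: $n\cdot_1[m,m']=[n\cdot_1m,m']-[n\cdot_1m',m]$; $[m,n\cdot_1m']=[m\cdot_2n,m']-[m,m']\cdot_2n$; $[m,m'\cdot_2n]=[m,m']\cdot_2n-[m\cdot_2n,m']$; $m\cdot_2[n,n']=(m\cdot_2n)\cdot_2n'-(m\cdot_2n')\cdot_2n$; $n\cdot_1(m\cdot_2n')=(n\cdot_1m)\cdot_2n'-[n,n']\cdot_1m$; $n\cdot_1(n'\cdot_1m)=[n,n']\cdot_1m-(n\cdot_1m)\cdot_2n'$.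 The semidirect product $M\rtimes N$ is $M\times N$ with $[(m,n),(m',n')]=([m,m']+n\cdot_1m'+m\cdot_2n',[n,n'])$. A crossed module $(M,N,(\cdot_1,\cdot_2),\partial)$: such an action and a Leibniz homomorphism $\partial\colon M\to N$ with $\partial(n\cdot_1m)=[n,\partial m]$, $\partial(m\cdot_2n)=[\partial m,n]$, $\partial(m)\cdot_1m'=[m,m']=m\cdot_2\partial(m')$. A braiding is a pair of bilinear maps $\{-,-\},\langle-,-\rangle\colon N\times N\to M$ with, for all $m,m'\in M$, $n,n',n''\in N$: $\partial\{n,n'\}=[n,n']=\partial\langle n,n'\rangle$; $\{\partial m,\partial m'\}=[m,m']=\langle\partial m,\partial m'\rangle$; $\{\partial m,n\}=m\cdot_2n=\langle\partial m,n\rangle$; $\{n,\partial m\}=n\cdot_1m=\langle n,\partial m\rangle$; $\{n,[n',n'']\}=\{[n,n'],n''\}-\{[n,n''],n'\}$; $\langle n,[n',n'']\rangle=\{[n,n'],n''\}-\langle[n,n''],n'\rangle$; $\{n,[n',n'']\}=\{[n,n'],n''\}-\langle[n,n''],n'\rangle$; $\langle n,[n',n'']\rangle=\langle[n,n'],n''\rangle-\langle[n,n''],n'\rangle$. A categorical Leibniz algebra $(C_1,C_0,s,t,e,k)$ is an internal category in Leibniz algebras: Leibniz homomorphisms $s,t\colon C_1\to C_0$, $e\colon C_0\to C_1$, $k\colon C_1\times_{C_0}C_1=\{(x,y):t(x)=s(y)\}\to C_1$ with $se=te=\mathrm{Id}$, $s(k(x,y))=s(x)$, $t(k(x,y))=t(y)$,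 $k(e(s(x)),x)=x=k(x,e(t(x)))$, $k$ associative. A braiding on it is a pair of bilinear maps $\tau,\psi\colon C_0\times C_0\to C_1$ with, for all $a,b,c\in C_0$, $x,y\in C_1$: $s(\tau_{a,b})=s(\psi_{a,b})=[a,b]$, $t(\tau_{a,b})=t(\psi_{a,b})=-[a,b]$; $k([x,y],\tau_{t(x),t(y)})=k(\tau_{s(x),s(y)},-[x,y])$ and likewise for $\psi$; $\tau_{a,[b,c]}=\tau_{[a,b],c}-\tau_{[a,c],b}$; $\psi_{a,[b,c]}=\tau_{[a,b],c}-\psi_{[a,c],b}$; $\tau_{a,[b,c]}=\tau_{[a,b],c}-\psi_{[a,c],b}$; $\psi_{a,[b,c]}=\psi_{[a,b],c}-\psi_{[a,c],b}$. *)

(* Defs.v *)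
From HB Require Import structures.
From mathcomp Require Import all_boot all_algebra.
Set Implicit Arguments. Unset Strict Implicit. Unset Printing Implicit Defensive.
Import GRing.Theory.
Local Open Scope ring_scope.

(* Leibniz K-algebras are represented as K-vector spaces (lmodType K) with a
   bracket satisfying bilinearity and the (right) Leibniz identity. *)

Definition linmap (K : fieldType) (U V : lmodType K) (f : U -> V) : Prop :=
  forall (a : K) (x y : U), f (a *: x + y) = a *: f x + f y.

Definition bilinear (K : fieldType) (U V W : lmodType K) (f : U -> V -> W) : Prop :=
  (forall (a : K) (x y : U) (z : V), f (a *: x + y) z = a *: f x z + f y z) /\
  (forall (a : K) (x : U) (y z : V), f x (a *: y + z) = a *: f x y + f x z).

Definition leibniz (K : fieldType) (L : lmodType K) (br : L -> L -> L) : Prop :=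
  bilinear br /\
  forall x y z : L, br x (br y z) = br (br x y) z - br (br x z) y.

Definition leibniz_hom (K : fieldType) (L1 L2 : lmodType K)
  (br1 : L1 -> L1 -> L1) (br2 : L2 -> L2 -> L2) (f : L1 -> L2) : Prop :=
  linmap f /\ forall x y, f (br1 x y) = br2 (f x) (f y).

Definition leibniz_action (K : fieldType) (M N : lmodType K)
  (brM : M -> M -> M) (brN : N -> N -> N)
  (act1 : N -> M -> M) (act2 : M -> N -> M) : Prop :=
  bilinear act1 /\ bilinear act2 /\
  (forall n m m', act1 n (brM m m') = brM (act1 n m) m' - brM (act1 n m') m) /\
  (forall m n m', brM m (act1 n m') = brM (act2 m n) m' - act2 (brM m m') n) /\
  (forall m m' n, brM m (act2 m' n) = act2 (brM m m') n - brM (act2 m n) m') /\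
  (forall m n n', act2 m (brN n n') = act2 (act2 m n) n' - act2 (act2 m n') n) /\
  (forall n m n', act1 n (act2 m n') = act2 (act1 n m) n' - act1 (brN n n') m) /\
  (forall n n' m, act1 n (act1 n' m) = act1 (brN n n') m - act2 (act1 n m) n').

Definition sd_br (K : fieldType) (M N : lmodType K)
  (brM : M -> M -> M) (brN : N -> N -> N)
  (act1 : N -> M -> M) (act2 : M -> N -> M) (x y : M * N) : M * N :=
  (brM x.1 y.1 + act1 x.2 y.1 + act2 x.1 y.2, brN x.2 y.2).

Definition crossed_module (K : fieldType) (M N : lmodType K)
  (brM : M -> M -> M) (brN : N -> N -> N)
  (act1 : N -> M -> M) (act2 : M -> N -> M) (d : M -> N) : Prop :=
  leibniz brM /\ leibniz brN /\ leibniz_action brM brN act1 act2 /\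
  leibniz_hom brM brN d /\
  (forall n m, d (act1 n m) = brN n (d m)) /\
  (forall m n, d (act2 m n) = brN (d m) n) /\
  (forall m m', act1 (d m) m' = brM m m') /\
  (forall m m', act2 m (d m') = brM m m').

Definition braiding (K : fieldType) (M N : lmodType K)
  (brM : M -> M -> M) (brN : N -> N -> N)
  (act1 : N -> M -> M) (act2 : M -> N -> M) (d : M -> N)
  (br1 br2 : N -> N -> M) : Prop :=
  bilinear br1 /\ bilinear br2 /\
  (forall n n', d (br1 n n') = brN n n' /\ d (br2 n n') = brN n n') /\
  (forall m m', br1 (d m) (d m') = brM m m' /\ br2 (d m) (d m') = brM m m') /\
  (forall m n, br1 (d m) n = act2 m n /\ br2 (d m) n = act2 m n) /\
  (forall n m, br1 n (d m) = act1 n m /\ br2 n (d m) = act1 n m) /\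
  (forall n n' n'',
     br1 n (brN n' n'') = br1 (brN n n') n'' - br1 (brN n n'') n') /\
  (forall n n' n'',
     br2 n (brN n' n'') = br1 (brN n n') n'' - br2 (brN n n'') n') /\
  (forall n n' n'',
     br1 n (brN n' n'') = br1 (brN n n') n'' - br2 (brN n n'') n') /\
  (forall n n' n'',
     br2 n (brN n' n'') = br2 (brN n n') n'' - br2 (brN n n'') n').

Definition braided_crossed_module (K : fieldType) (M N : lmodType K)
  (brM : M -> M -> M) (brN : N -> N -> N)
  (act1 : N -> M -> M) (act2 : M -> N -> M) (d : M -> N)
  (br1 br2 : N -> N -> M) : Prop :=
  crossed_module brM brN act1 act2 d /\ braiding brM brN act1 act2 d br1 br2.

(* The composition k is
   given as a map C1 -> C1 -> C1; only its values on the pullback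
   C1 x_{C0} C1 = {(x,y) | t x = s y} matter, and all conditions on k are
   imposed only on composable pairs.  The pullback carries the componentwise
   Leibniz structure of C1 x C1 (it is a subalgebra since s, t are
   homomorphisms); "k is a Leibniz homomorphism" is stated on it. *)
Definition categorical_leibniz (K : fieldType) (C1 C0 : lmodType K)
  (br1 : C1 -> C1 -> C1) (br0 : C0 -> C0 -> C0)
  (s t : C1 -> C0) (e : C0 -> C1) (k : C1 -> C1 -> C1) : Prop :=
  leibniz br1 /\ leibniz br0 /\
  leibniz_hom br1 br0 s /\ leibniz_hom br1 br0 t /\ leibniz_hom br0 br1 e /\
  (forall (a : K) x y x' y', t x = s y -> t x' = s y' ->
      k (a *: x + x') (a *: y + y') = a *: k x y + k x' y') /\
  (forall x y x' y', t x = s y -> t x' = s y' ->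
      k (br1 x x') (br1 y y') = br1 (k x y) (k x' y')) /\
  (forall a, s (e a) = a) /\ (forall a, t (e a) = a) /\
  (forall x y, t x = s y -> s (k x y) = s x) /\
  (forall x y, t x = s y -> t (k x y) = t y) /\
  (forall x, k (e (s x)) x = x) /\ (forall x, k x (e (t x)) = x) /\
  (forall x y z, t x = s y -> t y = s z -> k (k x y) z = k x (k y z)).

Definition cat_braiding (K : fieldType) (C1 C0 : lmodType K)
  (br1 : C1 -> C1 -> C1) (br0 : C0 -> C0 -> C0)
  (s t : C1 -> C0) (k : C1 -> C1 -> C1) (tau psi : C0 -> C0 -> C1) : Prop :=
  bilinear tau /\ bilinear psi /\
  (forall a b, s (tau a b) = br0 a b /\ s (psi a b) = br0 a b) /\
  (forall a b, t (tau a b) = - br0 a b /\ t (psi a b) = - br0 a b) /\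
  (forall x y, k (br1 x y) (tau (t x) (t y)) = k (tau (s x) (s y)) (- br1 x y)) /\
  (forall x y, k (br1 x y) (psi (t x) (t y)) = k (psi (s x) (s y)) (- br1 x y)) /\
  (forall a b c, tau a (br0 b c) = tau (br0 a b) c - tau (br0 a c) b) /\
  (forall a b c, psi a (br0 b c) = tau (br0 a b) c - psi (br0 a c) b) /\
  (forall a b c, tau a (br0 b c) = tau (br0 a b) c - psi (br0 a c) b) /\
  (forall a b c, psi a (br0 b c) = psi (br0 a b) c - psi (br0 a c) b).

Definition braided_categorical_leibniz (K : fieldType) (C1 C0 : lmodType K)
  (br1 : C1 -> C1 -> C1) (br0 : C0 -> C0 -> C0)
  (s t : C1 -> C0) (e : C0 -> C1) (k : C1 -> C1 -> C1)
  (tau psi : C0 -> C0 -> C1) : Prop :=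
  categorical_leibniz br1 br0 s t e k /\ cat_braiding br1 br0 s t k tau psi.

(* Main.v *)
Require Import Defs.
From HB Require Import structures.
From mathcomp Require Import all_boot all_algebra.
Import GRing.Theory.
Local Open Scope ring_scope.

Inductive zexp := ZAtom of nat | ZZero | ZAdd of zexp & zexp | ZOpp of zexp.

Fixpoint zeval {V : zmodType} (l : seq V) (e : zexp) : V :=
  match e with
  | ZAtom i => nth 0 l i
  | ZZero => 0
  | ZAdd a b => zeval l a + zeval l b
  | ZOpp a => - zeval l a
  end.

Fixpoint zcoef (e : zexp) (j : nat) : int :=
  match e with
  | ZAtom i => ((i == j) : nat)%:Z
  | ZZero => 0
  | ZAdd a b => zcoef a j + zcoef b j
  | ZOpp a => - zcoef a j
  end.

Lemma zevalE {V : zmodType} (l : seq V) e :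
  zeval l e = \sum_(j < size l) l`_j *~ zcoef e j.
Proof.
elim: e => [i||a IHa b IHb|a IHa] /=.
- case: (ltnP i (size l)) => H.
  + rewrite (bigD1 (Ordinal H)) //= eqxx mulr1z big1 ?addr0 // => j /eqP Hj.
    have -> : (i == j) = false.
      apply/negP => /eqP E; apply: Hj; apply: val_inj; by rewrite /= E.
    by rewrite mulr0z.
  + rewrite nth_default // big1 // => j _.
    have -> : (i == j) = false.
      apply/negP => /eqP E; move: (ltn_ord j); rewrite -E ltnNge H.
      done.
    by rewrite mulr0z.
- by rewrite big1 // => j _; rewrite mulr0z.
- by rewrite IHa IHb -big_split; apply: eq_bigr => j _; rewrite mulrzDr.
- by rewrite IHa -sumrN; apply: eq_bigr => j _; rewrite mulrNz.
Qed.

Lemma zcheck {V : zmodType} (l : seq V) e1 e2 :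
  all (fun j => zcoef e1 j == zcoef e2 j) (iota 0 (size l)) ->
  zeval l e1 = zeval l e2.
Proof.
move/allP=> H; rewrite !zevalE; apply: eq_bigr => j _.
by rewrite (eqP (H j _)) // mem_iota /= add0n ltn_ord.
Qed.

Ltac zfind x l :=
  lazymatch l with
  | ?y :: ?r => match constr:(tt) with
     | _ => let e := constr:(@erefl _ x : x = y) in constr:(0%N)
     | _ => let n := zfind x r in constr:(S n)
     end
  end.

Ltac zcollect t l :=
  lazymatch t with
  | 0%R => l
  | (?a + ?b)%R => let l1 := zcollect a l in zcollect b l1
  | (- ?a)%R => zcollect a l
  | _ => match constr:(tt) with
         | _ => let n := zfind t l in l
         | _ => constr:(t :: l)
         end
  end.

Ltac zreify t l :=
  lazymatch t with
  | 0%R => constr:(ZZero)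
  | (?a + ?b)%R => let x := zreify a l in let y := zreify b l in constr:(ZAdd x y)
  | (- ?a)%R => let x := zreify a l in constr:(ZOpp x)
  | _ => let n := zfind t l in constr:(ZAtom n)
  end.

Ltac zsolve :=
  lazymatch goal with
  | |- @eq ?T ?a ?b =>
    let l0 := constr:(@nil T) in
    let l1 := zcollect a l0 in
    let l := zcollect b l1 in
    let ea := zreify a l in
    let eb := zreify b l in
    change (zeval l ea = zeval l eb); apply: zcheck; vm_compute; reflexivity
  end.

Require Import Defs.
Set Implicit Arguments.
Section Bil.
Variables (K : fieldType) (U V W : lmodType K) (f : U -> V -> W).
Hypothesis Hf : bilinear f.
Lemma bil0l z : f 0 z = 0.
Proof. have := Hf.1 1 0 0 z; rewrite !scale1r addr0 => H.
by apply: (addrI (f 0 z)); rewrite addr0 -H. Qed.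
Lemma bil0r z : f z 0 = 0.
Proof. have := Hf.2 1 z 0 0; rewrite !scale1r addr0 => H.
by apply: (addrI (f z 0)); rewrite addr0 -H. Qed.
Lemma bilDl x y z : f (x + y) z = f x z + f y z.
Proof. by have := Hf.1 1 x y z; rewrite !scale1r. Qed.
Lemma bilDr x y z : f z (x + y) = f z x + f z y.
Proof. by have := Hf.2 1 z x y; rewrite !scale1r. Qed.
Lemma bilZl a x z : f (a *: x) z = a *: f x z.
Proof. by have := Hf.1 a x 0 z; rewrite !addr0 bil0l addr0. Qed.
Lemma bilZr a x z : f z (a *: x) = a *: f z x.
Proof. by have := Hf.2 a z x 0; rewrite !addr0 bil0r addr0. Qed.
Lemma bilNl x z : f (- x) z = - f x z.
Proof. by rewrite -scaleN1r bilZl scaleN1r. Qed.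
Lemma bilNr x z : f z (- x) = - f z x.
Proof. by rewrite -scaleN1r bilZr scaleN1r. Qed.
End Bil.

Section Lin.
Variables (K : fieldType) (U V : lmodType K) (f : U -> V).
Hypothesis Hf : linmap f.
Lemma lin0 : f 0 = 0.
Proof. have := Hf 1 0 0; rewrite !scale1r addr0 => H.
by apply: (addrI (f 0)); rewrite addr0 -H. Qed.
Lemma linD x y : f (x + y) = f x + f y.
Proof. by have := Hf 1 x y; rewrite !scale1r. Qed.
Lemma linZ a x : f (a *: x) = a *: f x.
Proof. by have := Hf a x 0; rewrite !addr0 lin0 addr0. Qed.
Lemma linN x : f (- x) = - f x.
Proof. by rewrite -scaleN1r linZ scaleN1r. Qed.
End Lin.

Ltac bexp H := rewrite ?(bil0l H, bil0r H, bilDl H, bilDr H, bilZl H, bilZr H, bilNl H, bilNr H).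
Ltac lexp H := rewrite ?(lin0 H, linD H, linZ H, linN H).
Ltac exall := repeat (match goal with
  | H : bilinear _ |- _ => progress bexp H
  | H : linmap _ |- _ => progress lexp H end).
Lemma pairZ (K : fieldType) (U V : lmodType K) (a : K) (u : U) (v : V) :
  a *: (u, v) = (a *: u, a *: v). Proof. by []. Qed.
Lemma pairD (K : fieldType) (U V : lmodType K) (u u' : U) (v v' : V) :
  (u, v) + (u', v') = (u + u', v + v'). Proof. by []. Qed.
Lemma pairN (K : fieldType) (U V : lmodType K) (u : U) (v : V) :
  - (u, v) = (- u, - v). Proof. by []. Qed.
Ltac pp := rewrite ?pairZ ?pairD ?pairN /=.
Ltac fin := exall; repeat progress rewrite ?scalerDr ?scaleNr ?scalerN ?scaler_nat ?mulr2n ?opprD ?opprK ?scaler0; zsolve.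
Theorem mainTheorem2 (K : fieldType) (M N : lmodType K)
  (brM : M -> M -> M) (brN : N -> N -> N)
  (act1 : N -> M -> M) (act2 : M -> N -> M) (d : M -> N)
  (br1 br2 : N -> N -> M) :
  (2%:R : K) != 0 ->
  braided_crossed_module brM brN act1 act2 d br1 br2 ->
  braided_categorical_leibniz (C1 := (M * N)%type) (C0 := N)
    (sd_br brM brN act1 act2) brN
    (fun x : M * N => x.2)
    (fun x : M * N => d x.1 + x.2)
    (fun n : N => (0 : M, n))
    (fun x y : M * N => (x.1 + y.1, x.2))
    (fun n n' : N => (- (2%:R : K) *: br1 n n', brN n n'))
    (fun n n' : N => (- (2%:R : K) *: br2 n n', brN n n')).
Proof.
move=> _ [[[LMb LMj] [[LNb LNj] [[A1 [A2 [ax1 [ax2 [ax3 [ax4 [ax5 ax6]]]]]]]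
  [[dl dbr] [d1 [d2 [d3 d4]]]]]]] [B1 [B2 [Bd [Bdd [Bdl [Bdr [Bx1 [Bx2 [Bx3 Bx4]]]]]]]]]].
have Bd1 := fun n n' => (Bd n n').1. have Bd2 := fun n n' => (Bd n n').2.
have Bdd1 := fun n n' => (Bdd n n').1. have Bdd2 := fun n n' => (Bdd n n').2.
have Bdl1 := fun n n' => (Bdl n n').1. have Bdl2 := fun n n' => (Bdl n n').2.
have Bdr1 := fun n n' => (Bdr n n').1. have Bdr2 := fun n n' => (Bdr n n').2.
rewrite /sd_br.
split; split.
-
  split; [split|].
  + move=> a [x1 x2] [y1 y2] [z1 z2]; pp; congr (_, _); fin.
  + move=> a [x1 x2] [y1 y2] [z1 z2]; pp; congr (_, _); fin.
  + move=> [x1 x2] [y1 y2] [z1 z2]; pp; congr (_, _).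
    * exall. rewrite !LMj !ax1 !ax2 !ax3 !ax4 !ax5 !ax6. fin.
    * by rewrite LNj.
split; first by split.
split.
  split; first by move=> a [x1 x2] [y1 y2].
  by move=> [x1 x2] [y1 y2].
split.
  split; first by move=> a [x1 x2] [y1 y2]; pp; fin.
  by move=> [x1 x2] [y1 y2] /=; exall; rewrite ?dbr ?d1 ?d2; fin.
split.
  split; first by move=> a x y; pp; congr (_, _); fin.
  by move=> a b /=; congr (_, _); fin.
split.
  by move=> a [x1 x2] [y1 y2] [x1' x2'] [y1' y2'] /= _ _; pp; congr (_, _); fin.
split.
  move=> [x1 x2] [y1 y2] [x1' x2'] [y1' y2'] /= <- <-; congr (_, _).
  exall; rewrite ?d3 ?d4; fin.
split; first by [].
split; first by move=> a /=; rewrite (lin0 dl) add0r.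
split; first by [].
split; first by move=> [x1 x2] [y1 y2] /= <-; fin.
split; first by move=> [x1 x2] /=; rewrite add0r.
split; first by move=> [x1 x2] /=; rewrite addr0.
  by move=> [x1 x2] [y1 y2] [z1 z2] /= _ _; rewrite addrA.
split; move=> a x y z /=; pp; congr (_, _); fin.
split.
  by split => a x y z /=; pp; congr (_, _); fin.
split; first by [].
split; first by move=> a b /=; split; exall; rewrite ?Bd1 ?Bd2; fin.
split.
  move=> [x1 x2] [y1 y2] /=; pp; congr (_, _); exall; rewrite ?Bdd1 ?Bdl1 ?Bdr1; fin.
split.
  move=> [x1 x2] [y1 y2] /=; pp; congr (_, _); exall; rewrite ?Bdd2 ?Bdl2 ?Bdr2; fin.
split.
  by move=> a b c; pp; congr (_, _); rewrite ?Bx1 ?LNj; fin.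
split.
  by move=> a b c; pp; congr (_, _); rewrite ?Bx2 ?LNj; fin.
split.
  by move=> a b c; pp; congr (_, _); rewrite ?Bx3 ?LNj; fin.
by move=> a b c; pp; congr (_, _); rewrite ?Bx4 ?LNj; fin.
Qed.
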